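(* Let $M\ge1$, $m=2M+1$, $h>0$, $T>0$, and let $D$, $I^{(-1)}$, $e_m$ be as in the context. For every $\mu>0$ the matrix $\mu^{-1}D^{-1}+I^{(-1)}$ is nonsingular, so $z(\mu):=e_m^{\mathsf T}\left(\mu^{-1}D^{-1}+I^{(-1)}\right)^{-1}e_m$ is well defined; setting $z(0):=0$ (equivalently $z(\mu)=\mu e_m^{\mathsf T}D(I_m+\mu I^{(-1)}D)^{-1}e_m$), one has $z(\mu)\in[0,2)$ for all $\mu\ge 0$.
   Context: Sinc time points: $t_j=\dfrac{T e^{jh}}{1+e^{jh}}$, $j=-M,\dots,M$. $D=h\,\mathrm{diag}\big(t_{-M}(T-t_{-M})/T,\dots,t_M(T-t_M)/T\big)\in\mathbb{R}^{m\times m}$. $I^{(-1)}\in\mathbb{R}^{m\times m}$ is the Toeplitz matrix with entries $I^{(-1)}_{l,j}=\frac12+\int_0^{l-j}\frac{\sin(\pi t)}{\pi t}\,dt$, $l,j=1,\dots,m$. $e_m=(1,\dots,1)^{\mathsf T}\in\mathbb{R}^m$. *)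

(* Defs.v *)
From Stdlib Require Import Reals.
From Coquelicot Require Import Coquelicot.
From HB Require Import structures.
From mathcomp Require Import all_boot all_algebra.
From mathcomp Require Import Rstruct.

Local Open Scope R_scope.

Definition sincR (t : R) : R :=
  if Req_EM_T t 0 then 1 else sin (PI * t) / (PI * t).

(* index i : 'I_(2M+1) (i = 0..2M) corresponds to j = i - M in {-M..M} *)
Definition sidx (M : nat) (i : 'I_((2 * M)%N.+1)) : R :=
  IZR (Z.of_nat (nat_of_ord i) - Z.of_nat M).

Definition sinc_node (M : nat) (h T : R) (i : 'I_((2 * M)%N.+1)) : R :=
  T * exp (sidx M i * h) / (1 + exp (sidx M i * h)).

Definition Dentry (M : nat) (h T : R) (i : 'I_((2 * M)%N.+1)) : R :=
  h * (sinc_node M h T i * (T - sinc_node M h T i) / T).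

Definition Ientry (M : nat) (l j : 'I_((2 * M)%N.+1)) : R :=
  / 2 + RInt sincR 0 (IZR (Z.of_nat (nat_of_ord l) - Z.of_nat (nat_of_ord j))).

Local Close Scope R_scope.
Local Open Scope ring_scope.

Definition Dmat (M : nat) (h T : R) : 'M[R]_((2 * M)%N.+1) :=
  diag_mx (\row_i Dentry M h T i).

Definition Iinv (M : nat) : 'M[R]_((2 * M)%N.+1) :=
  \matrix_(l, j) Ientry M l j.

Definition em (M : nat) : 'cV[R]_((2 * M)%N.+1) := const_mx 1.

Definition Amat (M : nat) (h T mu : R) : 'M[R]_((2 * M)%N.+1) :=
  mu^-1 *: invmx (Dmat M h T) + Iinv M.

Definition zfun (M : nat) (h T mu : R) : R :=
  if Req_EM_T mu 0 then 0
  else ((em M)^T *m invmx (Amat M h T mu) *m em M) ord0 ord0.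

(* Main.v *)
Require Import Defs.
From Stdlib Require Import Reals Lra Lia ZArith.
From Coquelicot Require Import Coquelicot.

Lemma sincR_even x : sincR (- x) = sincR x.
Proof.
unfold sincR; destruct (Rstruct.Req_EM_T (-x) 0); destruct (Rstruct.Req_EM_T x 0); simpl; try lra.
replace (PI * - x) with (- (PI * x)) by ring. rewrite sin_neg. field. split; [exact n0|apply PI_neq0].
Qed.

Lemma sincR_cont0 : continuous sincR 0.
Proof.
apply continuity_pt_filterlim.
intros eps Heps.
destruct (derivable_pt_lim_sin 0 eps Heps) as [d Hd].
pose proof PI_RGT_0 as HPI.
exists (d / PI); split.
{ apply Rdiv_lt_0_compat; [apply cond_pos|lra]. }
intros x [[_ Hx0] Hx]. simpl in Hx. unfold R_dist in Hx |- *.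
assert (Hx' : x <> 0) by (intro; apply Hx0; lra).
unfold sincR; destruct (Rstruct.Req_EM_T x 0); try lra.
destruct (Rstruct.Req_EM_T 0 0); try lra.
assert (HPx : PI * x <> 0) by (intro H; apply Rmult_integral in H; lra).
specialize (Hd (PI * x) HPx).
rewrite Rplus_0_l, sin_0, cos_0, Rminus_0_r in Hd.
apply Hd.
rewrite Rabs_mult, Rabs_right; [|lra].
rewrite Rminus_0_r in Hx.
apply (Rmult_lt_compat_l PI) in Hx; [|lra].
replace (PI * (d / PI)) with (pos d) in Hx by (field; lra). exact Hx.
Qed.

Lemma sincR_cont x : continuous sincR x.
Proof.
destruct (Req_dec x 0) as [->|Hx]; [apply sincR_cont0|].
pose proof PI_RGT_0 as HPI.
apply continuous_ext_loc with (g := fun y => sin (PI * y) / (PI * y)).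
- assert (Ha : 0 < Rabs x) by (apply Rabs_pos_lt; exact Hx).
  exists (mkposreal _ Ha). intros y Hy. simpl in Hy.
  unfold sincR; destruct (Rstruct.Req_EM_T y 0); [|reflexivity].
  exfalso. subst y. revert Hy. unfold ball; simpl. unfold AbsRing_ball, abs, minus, plus, opp; simpl.
  rewrite Rplus_0_l, Rabs_Ropp. lra.
- apply (@ex_derive_continuous R_AbsRing R_NormedModule (fun y => sin (PI * y) / (PI * y))). auto_derive.
  intro H; apply Rmult_integral in H; lra.
Qed.

Lemma ex_RInt_sinc a b : ex_RInt sincR a b.
Proof. apply (@ex_RInt_continuous R_CompleteNormedModule); intros; apply sincR_cont. Qed.

Lemma RInt_sinc_odd a : RInt sincR 0 (- a) = - RInt sincR 0 a.
Proof.
pose proof (@is_RInt_comp_opp R_NormedModule sincR 0 a (RInt sincR (-0) (-a))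
  (@RInt_correct R_CompleteNormedModule _ _ _ (ex_RInt_sinc _ _))) as H.
apply (@is_RInt_unique R_CompleteNormedModule) in H.
rewrite Ropp_0 in H. rewrite <- H.
rewrite (RInt_ext _ (fun y => opp (sincR y))).
- rewrite (@RInt_opp R_CompleteNormedModule); [reflexivity|apply ex_RInt_sinc].
- intros; rewrite sincR_even; reflexivity.
Qed.

Lemma Dentry_pos M h T i : Rlt 0 h -> Rlt 0 T -> Rlt 0 (Dentry M h T i).
Proof.
intros Hh HT; unfold Dentry, sinc_node.
set (E := exp (sidx M i * h)).
assert (HE : 0 < E) by apply exp_pos.
assert (H1 : 0 < T * E / (1 + E)).
{ apply Rdiv_lt_0_compat; [apply Rmult_lt_0_compat|]; lra. }
assert (H2 : T - T * E / (1 + E) = T / (1 + E)) by (field; lra).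
rewrite H2.
apply Rmult_lt_0_compat; [lra|].
apply Rdiv_lt_0_compat; [|lra].
apply Rmult_lt_0_compat; [lra|].
apply Rdiv_lt_0_compat; lra.
Qed.

From HB Require Import structures.
From mathcomp Require Import all_boot all_algebra.
From mathcomp Require Import Rstruct.
From mathcomp Require Import all_order.
From mathcomp Require Import lra.
Import Order.TTheory GRing.Theory Num.Theory.
Local Open Scope ring_scope.
Section Gen.
Variable F : realFieldType.
Variable n : nat.
Local Notation e := (const_mx 1 : 'cV[F]_n.+1).

Definition Q (v : 'rV[F]_n.+1) (X : 'M[F]_n.+1) := (v *m X *m v^T) 0 0.

Lemma QD v X Y : Q v (X + Y) = Q v X + Q v Y.
Proof. by rewrite /Q mulmxDr mulmxDl mxE. Qed.

Lemma QT v X : Q v X^T = Q v X.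
Proof.
rewrite /Q -{1}(trmxK v) -trmx_mul -trmx_mul mulmxA.
by rewrite [in LHS]mxE.
Qed.

Lemma const1E : (const_mx 1 : 'M[F]_n.+1) = e *m e^T.
Proof.
apply/matrixP=> i j; rewrite !mxE big_ord1 !mxE mulr1 //.
Qed.

Lemma Qconst v : Q v (const_mx 1) = (v *m e) 0 0 * (v *m e) 0 0.
Proof.
rewrite /Q const1E !mulmxA -(mulmxA (v *m e)) -trmx_mul.
by rewrite mxE big_ord1 [in X in _ * X]mxE.
Qed.

Lemma Qdiag v c : Q v (diag_mx c) = \sum_i v 0 i * v 0 i * c 0 i.
Proof.
rewrite /Q mul_mx_diag mxE; apply: eq_bigr => i _; rewrite !mxE.
by rewrite mulrAC.
Qed.

Lemma Qsym v B : B + B^T = const_mx 1 -> 2 * Q v B = (v *m e) 0 0 ^+ 2.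
Proof.
move=> HB; rewrite expr2 -Qconst -HB QD QT; lra.
Qed.

Lemma Qdiag_pos (v : 'rV[F]_n.+1) (c : 'rV[F]_n.+1) : (forall i, 0 < c 0 i) -> v != 0 -> 0 < Q v (diag_mx c).
Proof.
move=> Hc Hv; rewrite Qdiag.
have [i Hi] : exists i, v 0 i != 0.
  apply/existsP; apply: contraR Hv; rewrite negb_exists => /forallP H.
  apply/eqP/matrixP => a b; rewrite ord1 mxE; exact/eqP/negbNE/H.
rewrite (bigD1 i) //=.
have h1 : 0 < v 0 i * v 0 i * c 0 i.
  rewrite mulr_gt0 ?Hc // -expr2 lt_def sqr_ge0 andbT sqrf_eq0 Hi //.
have h2 : 0 <= \sum_(j | j != i) v 0 j * v 0 j * c 0 j.
  apply: sumr_ge0 => j _; apply: mulr_ge0; first by rewrite -expr2 sqr_ge0.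
  exact: ltW.
lra.
Qed.

Lemma key (c : 'rV[F]_n.+1) (B : 'M[F]_n.+1) :
  (forall i, 0 < c 0 i) -> B + B^T = const_mx 1 ->
  (diag_mx c + B) \in unitmx /\ 0 < (e^T *m invmx (diag_mx c + B) *m e) 0 0 < 2.
Proof.
move=> Hc HB; set A := diag_mx c + B.
have QA (v : 'rV[F]_n.+1) : v != 0 -> 0 < Q v A.
  move=> Hv; rewrite /A QD; have := Qsym v B HB; have := Qdiag_pos v c Hc Hv.
  have := sqr_ge0 ((v *m e) 0 0); lra.
have UA : A \in unitmx.
  rewrite unitmxE unitfE; apply/negP => /det0P [v Hv HvA].
  have := QA v Hv; rewrite /Q HvA mul0mx mxE ltxx //.
split=> //.
set y := invmx A *m e.
have Ay : A *m y = e by rewrite /y mulKVmx.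
set w := y^T.
have ze : (e^T *m invmx A *m e) = (w *m e)^T.
  by rewrite -mulmxA -/y trmx_mul /w trmxK.
have zQ : (e^T *m invmx A *m e) 0 0 = Q w A.
  rewrite -mulmxA -/y -Ay trmx_mul -QT /Q /w trmxK //.
have wne : w != 0.
  apply/negP => /eqP w0.
  have : y = 0 by rewrite -(trmxK y) -/w w0 trmx0.
  move=> y0; move: Ay; rewrite y0 mulmx0 => /matrixP /(_ ord0 ord0).
  by rewrite !mxE => /eqP; rewrite eq_sym oner_eq0.
have := QA w wne; rewrite /A QD; have := Qsym w B HB.
have Hs : (e^T *m invmx A *m e) 0 0 = (w *m e) 0 0 by rewrite ze mxE.
move: zQ; rewrite Hs /A QD.
have := Qdiag_pos w c Hc wne.
set s := (w *m e) 0 0; set q := Q w (diag_mx c); set r := Q w B.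
move=> hq hs h2 _.
apply/andP; split; nra.
Qed.
End Gen.

Lemma invmx_diag n (d : 'rV[R]_n.+1) : (forall i, d 0 i != 0) ->
  invmx (diag_mx d) = diag_mx (\row_i (d 0 i)^-1).
Proof.
move=> Hd.
have H : diag_mx d *m diag_mx (\row_i (d 0 i)^-1) = 1%:M.
  rewrite mulmx_diag -diag_const_mx; congr diag_mx; apply/rowP => i.
  by rewrite !mxE divff.
have U := (mulmx1_unit H).1.
by rewrite -[RHS](mulKmx U) H mulmx1.
Qed.

Lemma Iinv_sym M : Iinv M + (Iinv M)^T = const_mx 1.
Proof.
apply/matrixP => l j; rewrite !mxE /Ientry.
have -> : (Z.sub (Z.of_nat j) (Z.of_nat l) = Z.opp (Z.sub (Z.of_nat l) (Z.of_nat j))) by lia.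
rewrite opp_IZR RInt_sinc_odd.
rewrite -!RplusE; set x := RInt _ _ _.
change (@Algebra.opp _ x) with (Ropp x). transitivity R1; [Lra.lra|reflexivity].
Qed.

Theorem lemma3p2 (M : nat) (h T : R) :
  (1 <= M)%N -> Rlt 0 h -> Rlt 0 T ->
  (forall mu : R, Rlt 0 mu -> Amat M h T mu \in unitmx) /\
  (forall mu : R, Rle 0 mu ->
     Rle 0 (zfun M h T mu) /\ Rlt (zfun M h T mu) 2).
Proof.
move=> _ Hh HT.
have AE mu : Rlt 0 mu -> exists c : 'rV[R]_(2 * M).+1,
    (forall i, 0 < c 0 i) /\ Amat M h T mu = diag_mx c + Iinv M.
  move=> Hmu.
  have Hd i : 0 < (\row_i Dentry M h T i : 'rV[R]_(2 * M).+1) 0 i.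
    by rewrite mxE; apply/RltP/Dentry_pos.
  exists (\row_i (mu^-1 * ((\row_i Dentry M h T i : 'rV[R]_(2 * M).+1) 0 i)^-1)).
  split.
    move=> i; rewrite mxE; apply: mulr_gt0; rewrite invr_gt0 //.
    exact/RltP.
  rewrite /Amat /Dmat invmx_diag; last by move=> i; rewrite gt_eqF.
  congr (_ + _); apply/matrixP => i j; rewrite !mxE.
  by rewrite mulrnAr.
split.
  move=> mu Hmu; have [c [Hc ->]] := AE mu Hmu.
  exact: (@key R (2 * M) c (Iinv M) Hc (Iinv_sym M)).1.
move=> mu Hmu; rewrite /zfun.
case: (Rstruct.Req_EM_T mu 0) => [e0|Hne].
  simpl. split; [apply Rle_refl | apply Rlt_0_2].
have Hmu' : Rlt 0 mu by Lra.lra.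
rewrite [is_left _]/=.
have [c [Hc ->]] := AE mu Hmu'.
have /andP [H1 H2] := (@key R (2 * M) c (Iinv M) Hc (Iinv_sym M)).2.
rewrite /em; split; [apply: Rlt_le; exact/RltP | exact/RltP].
Qed.
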